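(* Let $A=kQ/I_S$ be a homotopy path algebra with path category $\mathcal C_A$ and path poset $\operatorname{Path}_A$. Then the functor $\Phi:\operatorname{Path}_A\to\mathcal C_A$, $p\mapsto h(p)$, $(p<q)\mapsto q/p$, is an almost discrete fibration.
   Context: $Q$ is a finite quiver (loops and cycles allowed); paths are concatenated left to right ($pq$ is $p$ followed by $q$), $t(p)$ and $h(p)$ are tail and head. A homotopy path algebra is $A=kQ/I_S$ where $S$ is a set of pairs $(p,q)$ of paths with equal tails and heads, $I_S$ is the ideal generated by the $p-q$, and $I_S$ is left and right cancellative: writing $p\sim q$ iff $p-q\in I_S$, $rp\sim rq$ implies $p\sim q$ and $pr\sim qr$ implies $p\sim q$. The path category $\mathcal C_A$ has objects the vertices of $Q$ and morphisms the $\sim$-classes of paths. $\operatorname{Path}_A$ is the set of all paths (including trivial ones) modulo $\sim$, ordered by $p\le q$ iff $q\sim pr$ for some path $r$, viewed as a category; $q/p$ denotes the (by cancellativity unique) class of $r$ with $q\sim pr$. A factorization $g=g_0\circ\cdots\circ g_{n+1}$ ($n\ge0$) is nontrivial if no $g_i$ is an isomorphism. A functor $F:\mathcal C\to\mathcal D$ is an almost discrete fibration if for every morphism $q$ of $\mathcal D$, every $p$ with $F(p)=q$ and every nontrivial factorization $q=g_0\circ\cdots\circ g_{n+1}$, there is a nontrivial factorization $p=f_0\circ\cdots\circ f_{n+1}$ with $F(f_i)=g_i$, unique up to $(f_i)\sim(f'_i)$ iff there are isomorphisms $h_0,\dots,h_n$ with $f'_0=f_0\circ h_0$, $f'_i=h_{i-1}^{-1}\circ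 f_i\circ h_i$ ($1\le i\le n$), $f'_{n+1}=h_n^{-1}\circ f_{n+1}$. *)

(* Defs.v *)
From mathcomp Require Import all_boot all_algebra.
From Stdlib Require Import ClassicalEpsilon.
Set Implicit Arguments. Unset Strict Implicit. Unset Printing Implicit Defensive.
Import GRing.Theory.

(* Generic (small) categories, presented "arrow-only":                 *)
(* a carrier of candidate morphisms, a predicate singling out the      *)
(* actual morphisms, domain/codomain, identities and composition.      *)
(* [comp g f] is  g \circ f  (f first); it is only meaningful when     *)
(* dom g = cod f.                                                      *)
Record cat := Cat {
  ob : Type;
  mor : Type;
  ismor : mor -> Prop;
  dom : mor -> ob;
  cod : mor -> ob;
  idm : ob -> mor;
  comp : mor -> mor -> mor }.

Record functor (C D : cat) := Functor {
  fob : ob C -> ob D;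
  fmor : mor C -> mor D }.

Definition is_functor (C D : cat) (F : functor C D) : Prop :=
  (forall f, ismor f -> ismor (fmor F f)) /\
  (forall f, ismor f -> dom (fmor F f) = fob F (dom f)
                     /\ cod (fmor F f) = fob F (cod f)) /\
  (forall x, fmor F (@idm C x) = @idm D (fob F x)) /\
  (forall f g, ismor f -> ismor g -> dom g = cod f ->
     fmor F (comp g f) = comp (fmor F g) (fmor F f)).

Definition inverse_pair (C : cat) (h k : mor C) : Prop :=
  ismor h /\ ismor k /\ dom k = cod h /\ cod k = dom h /\
  comp k h = @idm C (dom h) /\ comp h k = @idm C (cod h).

Definition iso (C : cat) (f : mor C) : Prop :=
  ismor f /\ exists g, inverse_pair f g.

(* composite  f0 \circ f1 \circ ... \circ fm  of the list [:: f0; ...; fm] *)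
Fixpoint compl (C : cat) (f : mor C) (fs : seq (mor C)) : mor C :=
  if fs is g :: gs then comp f (compl g gs) else f.

(* fl = [:: g_0; ...; g_{n+1}] (n >= 0) is a nontrivial factorization
   g = g_0 \circ ... \circ g_{n+1} *)
Definition nontriv_fact (C : cat) (g : mor C) (fl : seq (mor C)) : Prop :=
  2 <= size fl /\
  (forall i, i < size fl -> ismor (nth g fl i) /\ ~ iso (nth g fl i)) /\
  (forall i, i.+1 < size fl -> dom (nth g fl i) = cod (nth g fl i.+1)) /\
  compl (head g fl) (behead fl) = g.

(* (f_i) ~ (f'_i): isomorphisms h_0..h_n (with inverses k_i = h_i^-1) with
   f'_0 = f_0 h_0, f'_i = h_{i-1}^-1 f_i h_i (1<=i<=n), f'_{n+1} = h_n^-1 f_{n+1} *)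
Definition fact_equiv (C : cat) (d : mor C) (fl fl' : seq (mor C)) : Prop :=
  let n := (size fl).-2 in
  size fl' = size fl /\
  exists hs ks : seq (mor C),
    size hs = n.+1 /\ size ks = n.+1 /\
    (forall i, i <= n -> inverse_pair (nth d hs i) (nth d ks i)
                         /\ cod (nth d hs i) = dom (nth d fl i)) /\
    nth d fl' 0 = comp (nth d fl 0) (nth d hs 0) /\
    (forall i, 1 <= i <= n ->
       nth d fl' i = comp (nth d ks i.-1) (comp (nth d fl i) (nth d hs i))) /\
    nth d fl' n.+1 = comp (nth d ks n) (nth d fl n.+1).

Definition almost_discrete_fibration (C D : cat) (F : functor C D) : Prop :=
  forall (p : mor C) (gl : seq (mor D)),
    ismor p -> nontriv_fact (fmor F p) gl ->
    (exists fl, nontriv_fact p fl /\ map (fmor F) fl = gl) /\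
    (forall fl fl', nontriv_fact p fl -> map (fmor F) fl = gl ->
                    nontriv_fact p fl' -> map (fmor F) fl' = gl ->
                    fact_equiv p fl fl').

Section Quiver.
Variables (V E : finType) (tl hd : E -> V).

(* a raw path: tail vertex and the list of arrows, left to right *)
Definition rpath := (V * seq E)%type.
Definition rvalid (p : rpath) : bool :=
  if p.2 is a :: s then (tl a == p.1) && path (fun a b => hd a == tl b) a s
  else true.

Definition vpath := {p : rpath | rvalid p}.

Definition ptail (p : vpath) : V := (val p).1.
Definition phead (p : vpath) : V := foldl (fun _ a => hd a) (val p).1 (val p).2.

Definition etriv (v : V) : vpath := exist _ (v, [::]) (erefl true).

(* concatenation pq (p followed by q); meaningful when phead p = ptail q *)
Definition vcat (p q : vpath) : vpath :=
  odflt p (insub ((val p).1, (val p).2 ++ (val q).2)).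

Section Homotopy.
Variables (k : fieldType) (S : vpath * vpath -> Prop).
Local Open Scope ring_scope.

(* p ~ q  iff  p - q lies in the two-sided ideal I_S of kQ generated by the
   s1 - s2, (s1,s2) in S, i.e. p - q = sum_i c_i r_i (s1_i - s2_i) t_i
   (equality of coefficients at every path w). *)
Definition sim (p q : vpath) : Prop :=
  exists terms : seq (k * vpath * (vpath * vpath) * vpath),
    (forall x, x \in terms ->
       S x.1.2 /\ phead x.1.1.2 = ptail x.1.2.1 /\ phead x.1.2.1 = ptail x.2
               /\ phead x.1.1.2 = ptail x.1.2.2 /\ phead x.1.2.2 = ptail x.2) /\
    forall w : vpath,
      ((p == w)%:R - (q == w)%:R : k) =
      \sum_(x <- terms)
         x.1.1.1 * ((vcat (vcat x.1.1.2 x.1.2.1) x.2 == w)%:R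
                    - (vcat (vcat x.1.1.2 x.1.2.2) x.2 == w)%:R).

Definition left_cancellative : Prop :=
  forall r p q : vpath, phead r = ptail p -> phead r = ptail q ->
    sim (vcat r p) (vcat r q) -> sim p q.

Definition right_cancellative : Prop :=
  forall r p q : vpath, phead p = ptail r -> phead q = ptail r ->
    sim (vcat p r) (vcat q r) -> sim p q.

Definition pclass := {X : vpath -> Prop | exists p, X = sim p}.
Definition cls (p : vpath) : pclass := exist _ (sim p) (ex_intro _ p erefl).
Definition rep (X : pclass) : vpath :=
  proj1_sig (constructive_indefinite_description _ (proj2_sig X)).

Definition CA : cat :=
  {| ob := V; mor := pclass; ismor := fun _ => True;
     dom := fun f => ptail (rep f); cod := fun f => phead (rep f);
     idm := fun v => cls (etriv v);
     comp := fun g f => cls (vcat (rep f) (rep g)) |}.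

Definition ple (X Y : pclass) : Prop :=
  exists p q r : vpath, X = cls p /\ Y = cls q /\ phead p = ptail r /\
                        sim q (vcat p r).

(* Path_A as a (thin) category: a morphism X -> Y is the pair (X,Y) with X<=Y *)
Definition PathA : cat :=
  {| ob := pclass; mor := (pclass * pclass)%type;
     ismor := fun XY => ple XY.1 XY.2;
     dom := fst; cod := snd;
     idm := fun X => (X, X);
     comp := fun g f => (f.1, g.2) |}.

(* q/p : the (class of the) path r with q ~ p r *)
Definition pquot (X Y : pclass) : vpath :=
  epsilon (inhabits (rep X))
    (fun r => phead (rep X) = ptail r /\ sim (rep Y) (vcat (rep X) r)).

Definition Phi : functor PathA CA :=
  @Functor PathA CA (fun X => phead (rep X))
                    (fun XY => cls (pquot XY.1 XY.2)).

End Homotopy.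
End Quiver.

(* Main.v *)
Require Import Defs.
From mathcomp Require Import all_boot all_algebra zify.
From Stdlib Require Import Classical FunctionalExtensionality PropExtensionality ProofIrrelevance ClassicalEpsilon.
Set Implicit Arguments. Unset Strict Implicit. Unset Printing Implicit Defensive.
Import GRing.Theory.

Section Paths.
Variables (V E : finType) (tl hd : E -> V).
Local Notation vp := (vpath tl hd).

Lemma foldl_hd (a : E) s : foldl (fun _ a => hd a) (hd a) s = hd (last a s).
Proof. by elim: s a => [|b s IH] a //=. Qed.

Lemma rvalid_cat (x y : vp) : phead x = ptail y -> rvalid tl hd ((val x).1, (val x).2 ++ (val y).2).
Proof.
case: x => [[x1 x2] vx]; case: y => [[y1 y2] vy]; rewrite /phead /ptail /= => H.
case: x2 vx H => [|a s] /= vx H.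
  by subst y1.
case/andP: vx => ta ps; rewrite /rvalid /= ta /=.
rewrite cat_path ps /=.
rewrite foldl_hd in H.
case: y2 vy => [|b t] //= /andP [/eqP tb pt].
by rewrite pt andbT H tb.
Qed.

Lemma vcat_val (x y : vp) : phead x = ptail y -> val (vcat x y) = ((val x).1, (val x).2 ++ (val y).2).
Proof. by move=> H; rewrite /vcat (insubT _ (rvalid_cat H)). Qed.

Lemma ptail_vcat (x y : vp) : phead x = ptail y -> ptail (vcat x y) = ptail x.
Proof. by move=> H; rewrite /ptail vcat_val. Qed.

Lemma phead_vcat (x y : vp) : phead x = ptail y -> phead (vcat x y) = phead y.
Proof. by move=> H; rewrite {1}/phead vcat_val //= foldl_cat; move: H; rewrite /phead /ptail => ->. Qed.

Lemma vcatA (x y z : vp) : phead x = ptail y -> phead y = ptail z ->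
  vcat (vcat x y) z = vcat x (vcat y z).
Proof.
move=> H1 H2; apply: val_inj.
rewrite [LHS]vcat_val ?phead_vcat // [RHS]vcat_val ?ptail_vcat //.
by rewrite !vcat_val //= catA.
Qed.

Lemma vcat_etriv (x : vp) v : vcat x (etriv tl hd v) = x.
Proof. case: x => [[a b] vb]; rewrite /vcat /= cats0 (insubT _ vb) /=; exact: val_inj. Qed.

Lemma etriv_vcat (x : vp) : vcat (etriv tl hd (ptail x)) x = x.
Proof. by apply: val_inj; rewrite vcat_val //=; case: x => [[]]. Qed.

Lemma ptail_etriv v : ptail (etriv tl hd v) = v. Proof. by []. Qed.
Lemma phead_etriv v : phead (etriv tl hd v) = v. Proof. by []. Qed.

Lemma catsI' (T : Type) (r a b : seq T) : r ++ a = r ++ b -> a = b.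
Proof. by move/(congr1 (drop (size r))); rewrite !drop_size_cat. Qed.

Lemma catIs' (T : Type) (r a b : seq T) : a ++ r = b ++ r -> a = b.
Proof.
move=> e; have hs : size a = size b by move/(congr1 size): e; rewrite !size_cat => /addIn.
by move/(congr1 (take (size a))): e; rewrite take_size_cat // hs take_size_cat.
Qed.

Lemma vcat_injl (r z1 z2 : vp) : phead r = ptail z1 -> phead r = ptail z2 ->
  vcat r z1 = vcat r z2 -> z1 = z2.
Proof.
move=> H1 H2 /(congr1 val); rewrite !vcat_val // => -[] /catsI' e.
apply: val_inj; move: H1 H2; rewrite /ptail.
by case: z1 e => [[a1 b1] ?]; case: z2 => [[a2 b2] ?] /= -> <- <-.
Qed.

Lemma vcat_injr (r z1 z2 : vp) : phead z1 = ptail r -> phead z2 = ptail r ->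
  vcat z1 r = vcat z2 r -> z1 = z2.
Proof.
move=> H1 H2 /(congr1 val); rewrite !vcat_val // => -[] e /catIs' e2.
by apply: val_inj; move: e e2 {H1 H2}; case: z1 => [[a1 b1] ?]; case: z2 => [[a2 b2] ?] /= -> ->.
Qed.
End Paths.
Section Sim.
Variables (k : fieldType) (V E : finType) (tl hd : E -> V).
Variable (S : vpath tl hd * vpath tl hd -> Prop).
Hypothesis HS : forall st, S st -> ptail st.1 = ptail st.2 /\ phead st.1 = phead st.2.
Local Notation vp := (vpath tl hd).
Local Notation term := (k * vp * (vp * vp) * vp)%type.
Local Notation sim := (sim k S).
Local Open Scope ring_scope.

Definition uu (x : term) : vp := vcat (vcat x.1.1.2 x.1.2.1) x.2.
Definition vv (x : term) : vp := vcat (vcat x.1.1.2 x.1.2.2) x.2.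
Definition condx (x : term) : Prop :=
  S x.1.2 /\ phead x.1.1.2 = ptail x.1.2.1 /\ phead x.1.2.1 = ptail x.2
               /\ phead x.1.1.2 = ptail x.1.2.2 /\ phead x.1.2.2 = ptail x.2.

Lemma cond_uv x : condx x ->
  [/\ ptail (uu x) = ptail x.1.1.2, ptail (vv x) = ptail x.1.1.2,
      phead (uu x) = phead x.2 & phead (vv x) = phead x.2].
Proof.
case=> _ [h1 [h2 [h3 h4]]]; rewrite /uu /vv.
split.
- by rewrite ptail_vcat ?ptail_vcat // phead_vcat.
- by rewrite ptail_vcat ?ptail_vcat // phead_vcat.
- by rewrite phead_vcat // phead_vcat.
- by rewrite phead_vcat // phead_vcat.
Qed.

Lemma sim_refl p : sim p p.
Proof. by exists [::]; split => // w; rewrite big_nil subrr. Qed.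

Lemma sim_sym p q : sim p q -> sim q p.
Proof.
case=> T [HT HE]; exists [seq ((- x.1.1.1, x.1.1.2), x.1.2, x.2) | x <- T]; split.
  by move=> x /mapP [y yT ->]; exact: (HT y yT).
move=> w; rewrite big_map -opprB HE -sumrN; apply: eq_bigr => x _.
by rewrite /= mulNr.
Qed.

Lemma sim_trans p q r : sim p q -> sim q r -> sim p r.
Proof.
case=> T1 [HT1 HE1] [T2 [HT2 HE2]]; exists (T1 ++ T2); split.
  by move=> x; rewrite mem_cat => /orP [] ?; [apply: HT1 | apply: HT2].
by move=> w; rewrite big_cat /= -HE1 -HE2 addrA subrK.
Qed.

Lemma sum_eq1 (W : seq vp) (P : pred vp) a : uniq W -> a \in W ->
  \sum_(w <- W | P w) ((a == w)%:R : k) = (P a)%:R.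
Proof.
elim: W => [|b W IH] //= /andP [bW uW]; rewrite inE big_cons => /orP [/eqP ->|aW].
  rewrite eqxx big1_seq ?addr0; first by case: (P b).
  by move=> w /andP [_ wW]; case: eqP => // e; move: bW; rewrite e wW.
rewrite IH //; case: ifP => // _; case: eqP => [e|]; last by rewrite add0r.
by move: bW; rewrite -e aW.
Qed.

Lemma sim_th p q : sim p q -> ptail p = ptail q /\ phead p = phead q.
Proof.
case=> T [HT HE].
pose P := fun w : vp => (ptail w, phead w) == (ptail p, phead p).
pose W := undup (p :: q :: flatten [seq [:: uu x; vv x] | x <- T]).
have uW : uniq W by apply: undup_uniq.
have memW : forall x, x \in T -> (uu x \in W) && (vv x \in W).
  move=> x xT; rewrite !mem_undup !inE; apply/andP; split; apply/orP; right; apply/orP; right;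
  apply/flatten_mapP; exists x => //; by rewrite !inE eqxx ?orbT.
have := @eq_bigr _ 0 +%R _ W P _ _ (fun w _ => HE w).
rewrite sumrB !sum_eq1 // ?mem_undup ?inE ?eqxx ?orbT // exchange_big /=.
rewrite big1_seq; last first.
  move=> x /andP [_ xT]; rewrite -mulr_sumr sumrB.
  case/andP: (memW x xT) => uxW vxW; rewrite !sum_eq1 //.
  have [h1 h2 h3 h4] := cond_uv (HT x xT).
  by rewrite /P h1 h2 h3 h4 subrr mulr0.
rewrite /P eqxx; case: eqP => [[-> ->] //|_] /eqP.
by rewrite subr0 oner_eq0.
Qed.

Lemma sim_map (f : vp -> vp) (D : pred vp) (tr : term -> term) p q :
  {in D &, injective f} -> D p -> D q ->
  (forall x, condx x -> D (uu x) = D (vv x)) ->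
  (forall x, condx x -> D (uu x) ->
     [/\ condx (tr x), (tr x).1.1.1 = x.1.1.1, uu (tr x) = f (uu x) & vv (tr x) = f (vv x)]) ->
  sim p q -> sim (f p) (f q).
Proof.
move=> finj Dp Dq Duv Htr [T [HT HE]].
exists [seq if D (uu x) then tr x else ((0, x.1.1.2), x.1.2, x.2) | x <- T]; split.
  move=> x' /mapP [x xT ->]; case: ifP => Dx.
    by case: (Htr x (HT x xT) Dx).
  exact: (HT x xT).
move=> w; rewrite big_map.
have [[w' [Dw' <-]] | nw] := classic (exists w', D w' /\ f w' = w).
  rewrite (inj_in_eq finj) // (inj_in_eq finj) // HE.
  apply: eq_big_seq => x xT; case: ifP => Dx.
    have Dv : D (vv x) by rewrite -Duv //; apply: HT.
    have [c1 c2 c3 c4] := Htr x (HT x xT) Dx.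
    rewrite c2 -/(uu (tr x)) -/(vv (tr x)) c3 c4 !(inj_in_eq finj) //.
  have Dv : D (vv x) = false by rewrite -Duv //; apply: HT.
  have -> : (uu x == w') = false by apply/negbTE; apply: contraFN Dx => /eqP ->.
  have -> : (vv x == w') = false by apply/negbTE; apply: contraFN Dv => /eqP ->.
  by rewrite /= mul0r subrr mulr0.
have nf : forall z, D z -> (f z == w) = false.
  by move=> z Dz; apply/negbTE/eqP => e; apply: nw; exists z.
rewrite !nf // subrr big1_seq // => x /andP [_ xT]; case: ifP => Dx.
  have Dv : D (vv x) by rewrite -Duv //; apply: HT.
  have [c1 c2 c3 c4] := Htr x (HT x xT) Dx.
  by rewrite -/(uu (tr x)) -/(vv (tr x)) c3 c4 !nf // subrr mulr0.
by rewrite /= mul0r.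
Qed.

Lemma sim_left r p q : phead r = ptail p -> sim p q -> sim (vcat r p) (vcat r q).
Proof.
move=> hr spq; have [tq _] := sim_th spq.
apply: (@sim_map (vcat r) (fun z => ptail z == phead r)
          (fun x => ((x.1.1.1, vcat r x.1.1.2), x.1.2, x.2))) => //.
- by move=> z1 z2 /eqP h1 /eqP h2; apply: vcat_injl.
- by rewrite hr.
- by rewrite -tq hr.
- by move=> x cx; have [-> -> _ _] := cond_uv cx.
move=> x cx; have [h1 _ _ _] := cond_uv cx; rewrite h1 => /eqP ha.
case: (cx) => Sx [e1 [e2 [e3 e4]]].
have hra : phead r = ptail x.1.1.2 by [].
split => //.
- by rewrite /condx /= phead_vcat.
- have h2 : phead r = ptail (vcat x.1.1.2 x.1.2.1) by rewrite ptail_vcat.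
  have h3 : phead (vcat x.1.1.2 x.1.2.1) = ptail x.2 by rewrite phead_vcat.
  by rewrite /uu /= (vcatA hra e1) (vcatA h2 h3).
- have h2 : phead r = ptail (vcat x.1.1.2 x.1.2.2) by rewrite ptail_vcat.
  have h3 : phead (vcat x.1.1.2 x.1.2.2) = ptail x.2 by rewrite phead_vcat.
  by rewrite /vv /= (vcatA hra e3) (vcatA h2 h3).
Qed.

Lemma sim_right r p q : phead p = ptail r -> sim p q -> sim (vcat p r) (vcat q r).
Proof.
move=> hr spq; have [_ hq] := sim_th spq.
apply: (@sim_map (fun z => vcat z r) (fun z => phead z == ptail r)
          (fun x => ((x.1.1.1, x.1.1.2), x.1.2, vcat x.2 r))) => //.
- by move=> z1 z2 /eqP h1 /eqP h2; apply: vcat_injr.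
- by rewrite hr.
- by rewrite -hq hr.
- by move=> x cx; have [_ _ -> ->] := cond_uv cx.
move=> x cx; have [_ _ h1 _] := cond_uv cx; rewrite h1 => /eqP hb.
case: (cx) => Sx [e1 [e2 [e3 e4]]].
split => //.
- by rewrite /condx /= ptail_vcat.
- have h3 : phead (vcat x.1.1.2 x.1.2.1) = ptail x.2 by rewrite phead_vcat.
  by rewrite /uu /= (vcatA h3 hb).
- have h3 : phead (vcat x.1.1.2 x.1.2.2) = ptail x.2 by rewrite phead_vcat.
  by rewrite /vv /= (vcatA h3 hb).
Qed.
End Sim.
Section Cat.
Variables (k : fieldType) (V E : finType) (tl hd : E -> V).
Variable (S : vpath tl hd * vpath tl hd -> Prop).
Hypothesis HS : forall st, S st -> ptail st.1 = ptail st.2 /\ phead st.1 = phead st.2.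
Hypothesis Hlc : left_cancellative k S.
Local Notation vp := (vpath tl hd).
Local Notation sim := (sim k S).
Local Notation cl := (cls k S).
Local Notation pcl := (pclass k S).
Local Notation et := (etriv tl hd).

Lemma sim_t p q : sim p q -> ptail p = ptail q. Proof. by case/sim_th. Qed.
Lemma sim_h p q : sim p q -> phead p = phead q. Proof. by case/sim_th. Qed.

Lemma rep_spec (X : pcl) : proj1_sig X = sim (rep X).
Proof. exact: (proj2_sig (constructive_indefinite_description _ (proj2_sig X))). Qed.

Lemma rep_cls p : sim (rep (cl p)) p.
Proof.
have e := rep_spec (cl p); simpl in e.
apply: sim_sym; rewrite e; exact: sim_refl.
Qed.

Lemma rep_cls_t p : ptail (rep (cl p)) = ptail p. Proof. exact: sim_t (rep_cls p). Qed.
Lemma rep_cls_h p : phead (rep (cl p)) = phead p. Proof. exact: sim_h (rep_cls p). Qed.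

Lemma pclass_eq (X Y : pcl) : proj1_sig X = proj1_sig Y -> X = Y.
Proof.
case: X => [x hx]; case: Y => [y hy] /= e; subst y.
by rewrite (proof_irrelevance _ hx hy).
Qed.

Lemma cls_eq p q : sim p q -> cl p = cl q.
Proof.
move=> spq; apply: pclass_eq => /=.
apply: functional_extensionality => w; apply: propositional_extensionality; split.
  by move=> h; apply: sim_trans (sim_sym spq) h.
by move=> h; apply: sim_trans spq h.
Qed.

Lemma cls_sim p q : cl p = cl q -> sim p q.
Proof. by move/(congr1 (@proj1_sig _ _)) => /= ->; exact: sim_refl. Qed.

Lemma cls_rep (X : pcl) : cl (rep X) = X.
Proof. by apply: pclass_eq; rewrite /= rep_spec. Qed.

Lemma sim_lc r p q : phead r = ptail p -> phead r = ptail q ->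
  sim (vcat r p) (vcat r q) -> sim p q.
Proof. exact: Hlc. Qed.

Lemma vcat_cls a b : phead a = ptail b -> sim (vcat (rep (cl a)) (rep (cl b))) (vcat a b).
Proof.
move=> h; apply: sim_trans (_ : sim _ (vcat a (rep (cl b)))) _.
  by apply: sim_right; [rewrite rep_cls_h rep_cls_t | exact: rep_cls].
by apply: sim_left; [rewrite rep_cls_t | exact: rep_cls].
Qed.

Lemma ple_spec (X Y : pcl) : ple X Y ->
  phead (rep X) = ptail (pquot X Y) /\ sim (rep Y) (vcat (rep X) (pquot X Y)).
Proof.
case=> p [q [r [eX [eY [h s]]]]].
apply: (@epsilon_spec _ (inhabits (rep X)) (fun r => phead (rep X) = ptail r /\ sim (rep Y) (vcat (rep X) r))).
exists r.
have hX : sim (rep X) p by rewrite eX; exact: rep_cls.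
have hY : sim (rep Y) q by rewrite eY; exact: rep_cls.
have hr : phead (rep X) = ptail r by rewrite (sim_h hX).
split => //.
apply: sim_trans hY (sim_trans s _).
apply: sim_right; [by [] | exact: sim_sym].
Qed.

Lemma ple_spec_h (X Y : pcl) : ple X Y -> phead (rep Y) = phead (pquot X Y).
Proof.
move=> /ple_spec [h s]; by rewrite (sim_h s) phead_vcat.
Qed.

Lemma ple_intro p r : phead p = ptail r -> ple (cl p) (cl (vcat p r)).
Proof. by move=> h; exists p, (vcat p r), r; do 3!split => //; exact: sim_refl. Qed.

Lemma ple_refl (X : pcl) : ple X X.
Proof.
have := @ple_intro (rep X) (et (phead (rep X))) erefl.
by rewrite vcat_etriv cls_rep.
Qed.

Lemma pquot_intro p r : phead p = ptail r -> sim (pquot (cl p) (cl (vcat p r))) r.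
Proof.
move=> h; have [h1 s1] := ple_spec (ple_intro h).
apply: (@sim_lc (rep (cl p))) => //; first by rewrite rep_cls_h.
apply: sim_trans (sim_sym s1) _.
apply: sim_trans (rep_cls _) _.
by apply: sim_right; [exact: h | exact: sim_sym (rep_cls _)].
Qed.

Lemma ple_trans_spec (X Y Z : pcl) : ple X Y -> ple Y Z ->
  ple X Z /\ sim (pquot X Z) (vcat (pquot X Y) (pquot Y Z)).
Proof.
move=> hXY hYZ.
have [h1 s1] := ple_spec hXY; have [h2 s2] := ple_spec hYZ.
have h3 := ple_spec_h hXY.
have h4 : phead (pquot X Y) = ptail (pquot Y Z) by rewrite -h3.
have sZ : sim (rep Z) (vcat (rep X) (vcat (pquot X Y) (pquot Y Z))).
  rewrite -vcatA //; apply: sim_trans s2 _; apply: sim_right => //.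
have hXZ : ple X Z.
  exists (rep X), (rep Z), (vcat (pquot X Y) (pquot Y Z)); rewrite !cls_rep.
  by do 3!split => //; rewrite ptail_vcat.
split => //.
have [h5 s5] := ple_spec hXZ.
apply: (@sim_lc (rep X)) => //; first by rewrite ptail_vcat.
exact: sim_trans (sim_sym s5) sZ.
Qed.


Lemma iso_lemma a r : phead a = ptail r ->
  iso (C:=PathA k S) (cl a, cl (vcat a r)) -> iso (C:=CA k S) (cl r).
Proof.
move=> har [_ [[B A] [_ [hk [hd1 [hc1 _]]]]]] /=; simpl in hk, hd1, hc1; subst B A.
case: hk => p [q [s' [eB [eA [hps sq]]]]].
have sa : sim a q by apply: cls_sim.
have sp : sim (vcat a r) p by apply: cls_sim.
have hrh : phead r = ptail s'.
  by rewrite -hps -(sim_h sp) phead_vcat.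
have e1 : sim (vcat a (et (phead a))) (vcat a (vcat r s')).
  rewrite vcat_etriv -vcatA //; apply: sim_trans sa (sim_trans sq _).
  by apply: sim_right => //; exact: sim_sym.
have rs : sim (et (phead a)) (vcat r s').
  by apply: (@sim_lc a) => //; rewrite ptail_vcat.
have hsh : phead s' = ptail r.
  by rewrite -har -(phead_vcat hrh) -(sim_h rs).
have e2 : sim (vcat r (et (phead r))) (vcat r (vcat s' r)).
  rewrite vcat_etriv -vcatA //.
  have := sim_right (r:=r) (p:=et (phead a)) har rs.
  by rewrite har etriv_vcat.
have sr : sim (et (phead r)) (vcat s' r).
  by apply: (@sim_lc r) => //; rewrite ptail_vcat.
split => //; exists (cl s'); do 2!split => //.
split; first by rewrite /= rep_cls_t rep_cls_h.
split; first by rewrite /= rep_cls_t rep_cls_h.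
split.
  rewrite /= rep_cls_t; apply: cls_eq; apply: sim_trans (vcat_cls hrh) _.
  by rewrite -har; exact: sim_sym.
rewrite /= rep_cls_h; apply: cls_eq; apply: sim_trans (vcat_cls hsh) _.
exact: sim_sym.
Qed.

Lemma functor_ok : is_functor (Phi k S).
Proof.
split; first by [].
split.
  move=> [X Y] /= hXY; have [h1 s1] := ple_spec hXY.
  by rewrite rep_cls_t rep_cls_h -(ple_spec_h hXY).
split.
  move=> X /=; apply: cls_eq.
  have [h1 s1] := ple_spec (ple_refl X).
  apply: sim_sym; apply: (@sim_lc (rep X)) => //.
  by rewrite vcat_etriv.
move=> [X Y] [Y' Z] /= hXY hYZ e; subst Y'.
apply: cls_eq; have [_ s] := ple_trans_spec hXY hYZ; apply: sim_trans s _.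
apply: sim_sym; apply: vcat_cls.
by rewrite -(ple_spec_h hXY); case: (ple_spec hYZ).
Qed.

End Cat.
Section Fib.
Variables (k : fieldType) (V E : finType) (tl hd : E -> V).
Variable (S : vpath tl hd * vpath tl hd -> Prop).
Hypothesis Hlc : left_cancellative k S.
Local Notation vp := (vpath tl hd).
Local Notation sim := (sim k S).
Local Notation cl := (cls k S).
Local Notation pcl := (pclass k S).
Local Notation et := (etriv tl hd).

Definition wfrom (a : vp) (l : seq pcl) := foldl (fun acc g => vcat acc (rep g)) a (rev l).
Definition consec (d : pcl) (l : seq pcl) := forall i, i.+1 < size l ->
  ptail (rep (nth d l i)) = phead (rep (nth d l i.+1)).

Lemma wfrom_cons a f l : wfrom a (f :: l) = vcat (wfrom a l) (rep f).
Proof. by rewrite /wfrom rev_cons foldl_rcons. Qed.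

Lemma wfrom_nil a : wfrom a [::] = a. Proof. by []. Qed.

Lemma compl_w d a f fs : consec d (f :: fs) ->
  phead a = ptail (rep (nth d (f :: fs) (size fs))) ->
  [/\ phead a = ptail (rep (compl (C:=CA k S) f fs)),
      sim (vcat a (rep (compl (C:=CA k S) f fs))) (wfrom a (f :: fs))
    & phead (wfrom a (f :: fs)) = phead (rep f)].
Proof.
elim: fs f => [|g gs IH] f hc ha.
  rewrite /= wfrom_cons wfrom_nil; split => //; [exact: sim_refl | by rewrite phead_vcat].
have hc' : consec d (g :: gs) by move=> i hi; exact: (hc i.+1 hi).
have [IH1 IH2 IH3] := IH g hc' ha.
have hfg : ptail (rep f) = phead (rep g) := hc 0 erefl.
set C := compl (C:=CA k S) g gs in IH1 IH2 IH3 *.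
have hCf : phead (rep C) = ptail (rep f).
  by rewrite hfg -IH3 -(sim_h IH2) phead_vcat.
have -> : compl (C:=CA k S) f (g :: gs) = cl (vcat (rep C) (rep f)) by [].
split.
- by rewrite rep_cls_t ptail_vcat.
- rewrite wfrom_cons.
  apply: sim_trans (_ : sim _ (vcat a (vcat (rep C) (rep f)))) _.
    apply: sim_left; first by rewrite rep_cls_t ptail_vcat.
    exact: rep_cls.
  rewrite -vcatA //; apply: sim_right => //.
  by rewrite phead_vcat.
- by rewrite wfrom_cons phead_vcat // IH3 hfg.
Qed.

Lemma complP (d : pcl * pcl) (l : seq (pcl * pcl)) : 0 < size l ->
  compl (C:=PathA k S) (head d l) (behead l) = ((nth d l (size l).-1).1, (nth d l 0).2).
Proof.
case: l => [|f fs] //= _.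
elim: fs f => [|g gs IH] f.
  by case: f.
by rewrite /= IH.
Qed.

Lemma fact_equiv_refl (d : pcl * pcl) (fl : seq (pcl * pcl)) : 2 <= size fl ->
  (forall i, i.+1 < size fl -> (nth d fl i).1 = (nth d fl i.+1).2) ->
  fact_equiv (C:=PathA k S) d fl fl.
Proof.
move=> h2 hc; split => //.
set n := (size fl).-2.
have hn : n.+1 < size fl by rewrite /n; case: (size fl) h2 => [|[|m]].
pose hs := mkseq (fun i => ((nth d fl i).1, (nth d fl i).1)) n.+1.
exists hs, hs; rewrite /hs size_mkseq; do 2!split => //.
split.
  move=> i hi; rewrite (nth_mkseq d) //; split => //.
  by split; [exact: ple_refl | split; [exact: ple_refl | by []]].
split; first by rewrite (nth_mkseq d) //=; case: (nth d fl 0).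
split.
  move=> i /andP [h1 hi]; rewrite !(nth_mkseq d) //; last by case: i h1 hi => // i _ /ltnW.
  case: i h1 hi => // i _ hi /=.
  rewrite (hc i); first by case: (nth d fl i.+1).
  by lia.
rewrite (nth_mkseq d) //= (hc n) //.
by case: (nth d fl n.+1).
Qed.


Lemma fib_ok : almost_discrete_fibration (Phi k S).
Proof.
move=> [X Y] gl hXY [hs [hiso [hcons hcomp]]].
simpl in hXY, hiso, hcons, hcomp |- *.
set g0 := cl (pquot X Y) in hiso hcons hcomp *.
have hc : consec g0 gl by move=> i hi; exact: hcons i hi.
clear hcons.
case: gl hs hiso hc hcomp => [|f fs] // hs hiso hc hcomp.
simpl in hcomp.
set gl := f :: fs in hs hiso hc *.
have [h1 s1] := ple_spec hXY.
have phX : phead (rep X) = ptail (rep (nth g0 gl (size fs))).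
  have [e _ _] := compl_w (a := et (ptail (rep (nth g0 gl (size fs))))) hc erefl.
  by move: e; rewrite hcomp => e; rewrite h1 -(rep_cls_t k S (pquot X Y)) -/g0 -e.
pose w i := wfrom (rep X) (drop i gl).
have wS : forall i, i < size gl -> w i = vcat (w i.+1) (rep (nth g0 gl i)).
  by move=> i hi; rewrite /w (drop_nth g0 hi) wfrom_cons.
have wsz : w (size fs).+1 = rep X by rewrite /w drop_oversize.
have w0 : w 0 = wfrom (rep X) gl by rewrite /w drop0.
have whd : forall i, i < size gl -> phead (w i) = phead (rep (nth g0 gl i)).
  move=> i hi; rewrite /w (drop_nth g0 hi).
  have hc' : consec g0 (nth g0 gl i :: drop i.+1 gl).
    move=> j; rewrite -(drop_nth g0 hi) size_drop => hj; rewrite !nth_drop addnS.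
    apply: hc; lia.
  have hl' : phead (rep X) = ptail (rep (nth g0 (nth g0 gl i :: drop i.+1 gl) (size (drop i.+1 gl)))).
    rewrite -(drop_nth g0 hi) nth_drop size_drop.
    have -> : i + (size gl - i.+1) = size fs by rewrite /gl /= in hi *; lia.
    exact: phX.
  by have [_ _ ->] := compl_w hc' hl'.
have wtl : forall i, i < size gl -> phead (w i.+1) = ptail (rep (nth g0 gl i)).
  move=> i hi; case: (ltnP i.+1 (size gl)) => hi'.
    by rewrite whd // hc.
  have ei : i = size fs by move: hi hi'; rewrite /gl /=; lia.
  by rewrite ei wsz.
have hY : Y = cl (w 0).
  rewrite -(cls_rep Y); apply: cls_eq.
  have [_ e _] := compl_w (a := rep X) hc phX.
  rewrite hcomp in e.
  rewrite w0; apply: sim_trans s1 _; apply: sim_trans _ e; apply: sim_left => //.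
  exact: sim_sym (rep_cls _ _ _).
pose F i := (cl (w i.+1), cl (w i)).
have hF2 : forall i, i < size gl -> cl (vcat (rep (cl (w i.+1))) (rep (nth g0 gl i))) = cl (w i).
  move=> i hi; apply: cls_eq; rewrite (wS i hi); apply: sim_right.
    by rewrite rep_cls_h; exact: wtl.
  exact: rep_cls.
have key : forall fl, nontriv_fact (C:=PathA k S) (X,Y) fl ->
    map (fmor (Phi k S)) fl = gl -> fl = mkseq F (size gl).
  move=> fl [hs1 [hi1 [hc1 hcomp1]]] hm.
  have sz : size fl = size gl by rewrite -hm size_map.
  have h2 : forall i, i < size gl -> (nth (X,Y) fl i).1 = cl (w i.+1) ->
                 (nth (X,Y) fl i).2 = cl (w i).
    move=> i hi e1; have hi' : i < size fl by rewrite sz.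
    have [hpl _] := hi1 i hi'.
    have [hh ss] := ple_spec hpl.
    have hg : nth g0 gl i = cl (pquot (nth (X,Y) fl i).1 (nth (X,Y) fl i).2).
      by rewrite -hm (nth_map (X,Y)) ?sz.
    rewrite -(cls_rep (nth (X,Y) fl i).2) -(hF2 i hi) -e1; apply: cls_eq.
    apply: sim_trans ss _; apply: sim_left => //; rewrite hg; exact: sim_sym (rep_cls _ _ _).
  have h1' : forall n, n < size gl -> (nth (X,Y) fl (size gl - n.+1)).1 = cl (w (size gl - n)).
    elim=> [|n IH] hn.
      have hf0 : 0 < size fl by rewrite sz.
      have := complP (X,Y) hf0; rewrite hcomp1 sz => -[e _].
      by rewrite subn1 subn0 -e /= wsz cls_rep.
    have ei : (size gl - n.+2).+1 = size gl - n.+1 by lia.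
    have hi2 : (size gl - n.+2).+1 < size fl by rewrite sz; lia.
    have e' : (nth (X,Y) fl (size gl - n.+2)).1 = (nth (X,Y) fl (size gl - n.+2).+1).2 := hc1 _ hi2.
    rewrite e' ei; apply: h2; first by lia.
    have -> : (size gl - n.+1).+1 = size gl - n by lia.
    apply: IH; lia.
  apply: (@eq_from_nth _ (X,Y)); first by rewrite size_mkseq.
  move=> j; rewrite sz => hj; rewrite (nth_mkseq (X,Y)) //.
  have hj' : size gl - j.+1 < size gl by lia.
  have e1 := h1' (size gl - j.+1) hj'.
  have ej : size gl - (size gl - j.+1).+1 = j by lia.
  have ej' : size gl - (size gl - j.+1) = j.+1 by lia.
  rewrite ej ej' in e1.
  have e2 := h2 j hj e1.
  by case: (nth (X,Y) fl j) e1 e2 => /= a b -> ->.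
have ntF : nontriv_fact (C:=PathA k S) (X,Y) (mkseq F (size gl)).
  split; first by rewrite size_mkseq.
  split.
    move=> i; rewrite size_mkseq => hi; rewrite (nth_mkseq (X,Y)) //=; split.
      rewrite (wS i hi); apply: ple_intro; exact: wtl.
    move=> hI; apply: (proj2 (hiso i hi)).
    rewrite -(cls_rep (nth g0 gl i)); apply: (iso_lemma Hlc (wtl i hi)).
    by rewrite -(wS i hi).
  split.
    move=> i; rewrite size_mkseq => hi; rewrite !(nth_mkseq (X,Y)) //; exact: ltnW.
  rewrite complP ?size_mkseq // !(nth_mkseq (X,Y)) //=.
  by rewrite wsz cls_rep hY.
split.
  exists (mkseq F (size gl)); split => //.
  apply: (@eq_from_nth _ g0); first by rewrite size_map size_mkseq.
  move=> i; rewrite size_map size_mkseq => hi.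
  rewrite (nth_map (X,Y)) ?size_mkseq // (nth_mkseq (X,Y)) //=.
  apply: (eq_trans _ (cls_rep _)); apply: cls_eq.
  rewrite (wS i hi); apply: (pquot_intro Hlc); exact: wtl.
move=> fl fl' n1 m1 n2 m2; rewrite (key fl n1 m1) (key fl' n2 m2).
apply: fact_equiv_refl; first by rewrite size_mkseq.
move=> i; rewrite size_mkseq => hi; rewrite !(nth_mkseq (X,Y)) //; exact: ltnW.
Qed.

End Fib.

Theorem proposition4p1 (k : fieldType) (V E : finType) (tl hd : E -> V)
  (S : vpath tl hd * vpath tl hd -> Prop)
  (HS : forall st, S st ->
          ptail st.1 = ptail st.2 /\ phead st.1 = phead st.2)
  (Hlc : left_cancellative k S) (Hrc : right_cancellative k S) :
  is_functor (Phi k S) /\ almost_discrete_fibration (Phi k S).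
Proof.
split; [exact: (functor_ok Hlc) | exact: (fib_ok Hlc)].
Qed.
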